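(* Let $d\ge 1$, $\bm z\in\mathbb{R}^d$ and $\alpha\ge 1$, and let $\bm p^\star = \alpha\text{-entmax}(\bm z)$. Let $\mathcal S=\{i: p^\star_i>0\}$ be the support of $\bm p^\star$. Define, for $i\in\mathcal S$, $\tilde p_i = \dfrac{(p_i^\star)^{2-\alpha}}{\sum_{j\in\mathcal S}(p_j^\star)^{2-\alpha}}$ and $\tilde p_i=0$ for $i\notin\mathcal S$, and $h_i = -p_i^\star\log p_i^\star$ (with $0\log 0=0$). Then, at every $(\bm z,\alpha)$ at which $\alpha\mapsto \alpha\text{-entmax}(\bm z)$ is differentiable (for $\alpha=1$: the one-sided derivative from $\alpha\to1^+$), the $i$-th component of the Jacobian $\bm g = \partial\, \alpha\text{-entmax}(\bm z)/\partial\alpha$ is $$ g_i = \begin{cases} \dfrac{p_i^\star-\tilde p_i}{(\alpha-1)^2} + \dfrac{h_i - \tilde p_i\sum_j h_j}{\alpha-1}, & \alpha>1,\\[2ex] \dfrac{h_i\log p_i^\star - p_i^\star\sum_j h_j\log p_j^\star}{2}, & \alpha=1,\end{cases}$$ where in the $\alpha=1$ case $h_i\log p_i^\star=-p_i^\star\log^2 p_i^\star$, i.e. $g_i = \tfrac12\big(-p_i^\star\log^2p_i^\star + p_i^\star\sum_j p_j^\star\log^2 p_j^\star\big)$. In particular $g_i=0$ whenever $p_i^\star=0$.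
   Context: The probability simplex is $\triangle^d=\{\bm p\in\mathbb{R}^d: p_i\ge 0,\ \sum_i p_i=1\}$. For $\alpha\ge1$ the Tsallis entropy is $\mathsf H^{T}_\alpha(\bm p)=\frac{1}{\alpha(\alpha-1)}\sum_j (p_j-p_j^\alpha)$ for $\alpha\neq1$ and $\mathsf H^T_1(\bm p)=-\sum_j p_j\log p_j$ (Shannon entropy). The $\alpha$-entmax mapping is $\alpha\text{-entmax}(\bm z)=\arg\max_{\bm p\in\triangle^d}\ \bm p^\top\bm z+\mathsf H^T_\alpha(\bm p)$ (the maximizer is unique). For $\alpha=1$ it equals softmax; for $\alpha>1$ the solution has the form $p^\star_i=[(\alpha-1)(z_i-\tau^\star)]_+^{1/(\alpha-1)}$ for a unique scalar $\tau^\star$ ensuring $\sum_i p_i^\star=1$, where $[t]_+=\max(t,0)$. *)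

(* Defs.v *)
From Stdlib Require Import Reals Lra.
Open Scope R_scope.

(* Vectors in R^d are functions nat -> R; only indices i < d matter. *)
Fixpoint rsum (n : nat) (f : nat -> R) : R :=
  match n with O => 0 | S m => rsum m f + f m end.

Definition xlogx (x : R) : R := if Rlt_dec 0 x then x * ln x else 0.

Definition rpow (x a : R) : R := if Rlt_dec 0 x then Rpower x a else 0.

Definition in_simplex (d : nat) (p : nat -> R) : Prop :=
  (forall i, (i < d)%nat -> 0 <= p i) /\ rsum d p = 1.

Definition tsallis (d : nat) (alpha : R) (p : nat -> R) : R :=
  if Req_EM_T alpha 1 then - rsum d (fun j => xlogx (p j))
  else / (alpha * (alpha - 1)) * rsum d (fun j => p j - rpow (p j) alpha).

Definition entmax_obj (d : nat) (alpha : R) (z p : nat -> R) : R :=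
  rsum d (fun i => p i * z i) + tsallis d alpha p.

Definition is_entmax (d : nat) (alpha : R) (z p : nat -> R) : Prop :=
  in_simplex d p /\
  forall q, in_simplex d q -> entmax_obj d alpha z q <= entmax_obj d alpha z p.

Definition right_deriv (f : R -> R) (x l : R) : Prop :=
  forall eps, 0 < eps -> exists delta, 0 < delta /\
    forall h, 0 < h < delta -> Rabs ((f (x + h) - f x) / h - l) < eps.

Definition ptilde (d : nat) (alpha : R) (p : nat -> R) (i : nat) : R :=
  if Rlt_dec 0 (p i) then
    Rpower (p i) (2 - alpha) /
      rsum d (fun j => if Rlt_dec 0 (p j) then Rpower (p j) (2 - alpha) else 0)
  else 0.

Definition hneg (p : nat -> R) (i : nat) : R := - xlogx (p i).

(* Main.v *)
Require Import Defs.
From Stdlib Require Import Reals Lra Lia.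
Open Scope R_scope.

Lemma rsum_ext n f g : (forall k, (k < n)%nat -> f k = g k) -> rsum n f = rsum n g.
Proof. induction n; simpl; intros H; auto. rewrite IHn; [rewrite H|]; auto; intros; apply H; lia. Qed.

Lemma rsum_plus n f g : rsum n (fun k => f k + g k) = rsum n f + rsum n g.
Proof. induction n; simpl; [lra|rewrite IHn; lra]. Qed.

Lemma rsum_scal n c f : rsum n (fun k => c * f k) = c * rsum n f.
Proof. induction n; simpl; [lra|rewrite IHn; lra]. Qed.

Lemma rsum_upd n f i a : (i < n)%nat ->
  rsum n (fun k => if Nat.eq_dec k i then a else f k) = rsum n f + (a - f i).
Proof.
  induction n; intros H; [lia|]. simpl.
  destruct (Nat.eq_dec n i).
  - subst. rewrite (rsum_ext _ _ f). lra. intros k Hk. destruct (Nat.eq_dec k i); [lia|auto].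
  - rewrite IHn by lia. lra.
Qed.

Lemma rsum_nonpos n f : (forall k, (k < n)%nat -> f k <= 0) -> rsum n f <= 0.
Proof. induction n; simpl; intros H; [lra|]. assert (f n <= 0) by (apply H; lia).
  assert (rsum n f <= 0) by (apply IHn; intros; apply H; lia). lra. Qed.

Lemma rsum_nonneg n f : (forall k, (k < n)%nat -> 0 <= f k) -> 0 <= rsum n f.
Proof. induction n; simpl; intros H; [lra|]. assert (0 <= f n) by (apply H; lia).
  assert (0 <= rsum n f) by (apply IHn; intros; apply H; lia). lra. Qed.

Lemma rsum_exists_pos n f : rsum n f = 1 -> exists m, (m < n)%nat /\ 0 < f m.
Proof. intros H. destruct (Classical_Prop.classic (exists m, (m < n)%nat /\ 0 < f m)) as [E|E]; auto.
  exfalso. assert (rsum n f <= 0). apply rsum_nonpos. intros k Hk.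
  destruct (Rle_lt_dec (f k) 0); auto. exfalso; apply E; eauto. lra. Qed.

Definition pert (p : nat -> R) (i j : nat) (t : R) (k : nat) : R :=
  if Nat.eq_dec k i then p i + t else if Nat.eq_dec k j then p j - t else p k.

Lemma rsum_pert n (G : nat -> R -> R) p i j t : i <> j -> (i < n)%nat -> (j < n)%nat ->
  rsum n (fun k => G k (pert p i j t k)) =
  rsum n (fun k => G k (p k)) + (G i (p i + t) - G i (p i)) + (G j (p j - t) - G j (p j)).
Proof.
  intros Hij Hi Hj.
  rewrite (rsum_ext n _ (fun k => if Nat.eq_dec k i then G i (p i + t) else
     (fun k => if Nat.eq_dec k j then G j (p j - t) else G k (p k)) k)).
  2:{ intros k Hk. unfold pert. destruct (Nat.eq_dec k i); [subst; auto|].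
      destruct (Nat.eq_dec k j); subst; auto. }
  rewrite rsum_upd by auto. rewrite rsum_upd by auto.
  destruct (Nat.eq_dec i j); [contradiction|]. lra.
Qed.

Lemma pert_simplex d p i j t : in_simplex d p -> i <> j -> (i < d)%nat -> (j < d)%nat ->
  0 <= p i + t -> 0 <= p j - t -> in_simplex d (pert p i j t).
Proof.
  intros [H1 H2] Hij Hi Hj Ht1 Ht2. split.
  - intros k Hk. unfold pert. destruct (Nat.eq_dec k i); auto. destruct (Nat.eq_dec k j); auto.
  - rewrite (rsum_pert d (fun _ x => x)) by auto. simpl. change (rsum d (fun k => p k)) with (rsum d p). rewrite H2. lra.
Qed.

Definition Tc (a : R) : R := if Req_EM_T a 1 then -1 else / (a * (a - 1)).
Definition Tpsi (a x : R) : R := if Req_EM_T a 1 then xlogx x else x - rpow x a.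

Lemma tsallis_form d a p : tsallis d a p = Tc a * rsum d (fun k => Tpsi a (p k)).
Proof. unfold tsallis, Tc, Tpsi. destruct (Req_EM_T a 1).
  - rewrite <- (rsum_scal d (-1) (fun k => xlogx (p k))). simpl.
    rewrite (rsum_ext d (fun k => -1 * xlogx (p k)) (fun k => - xlogx (p k))) by (intros; ring).
    clear e. induction d; simpl; [ring|]. rewrite <- IHd. ring.
  - auto.
Qed.

Lemma obj_pert d a z p i j t : i <> j -> (i < d)%nat -> (j < d)%nat ->
  entmax_obj d a z (pert p i j t) - entmax_obj d a z p =
  t * (z i - z j) + Tc a * (Tpsi a (p i + t) - Tpsi a (p i) + Tpsi a (p j - t) - Tpsi a (p j)).
Proof.
  intros Hij Hi Hj. unfold entmax_obj. rewrite !tsallis_form.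
  rewrite (rsum_pert d (fun k x => x * z k)) by auto.
  rewrite (rsum_pert d (fun _ x => Tpsi a x)) by auto. ring.
Qed.

Lemma extremum_deriv k x l : (exists r, 0 < r /\ forall y, Rabs (y - x) < r -> k y <= k x) ->
  derivable_pt_lim k x l -> l = 0.
Proof.
  intros [r [Hr Hmax]] Hd.
  destruct (Rtotal_order l 0) as [Hl|[Hl|Hl]]; auto; exfalso.
  - destruct (Hd (- l) ltac:(lra)) as [del Hdel].
    set (h := - (Rmin del r / 2)).
    assert (Hm : 0 < Rmin del r) by (apply Rmin_pos; [apply cond_pos|lra]).
    assert (Hh : h <> 0) by (unfold h; lra).
    assert (Hha : Rabs h < del).
    { unfold h. rewrite Rabs_Ropp, Rabs_right by lra. pose proof (Rmin_l del r). lra. }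
    specialize (Hdel h Hh Hha).
    assert (k (x + h) <= k x). { apply Hmax. replace (x + h - x) with h by ring.
      unfold h. rewrite Rabs_Ropp, Rabs_right by lra. pose proof (Rmin_r del r). lra. }
    set (q := (k (x + h) - k x) / h) in *.
    assert (q * h = k (x + h) - k x) by (unfold q; field; auto).
    assert (h < 0) by (unfold h; lra).
    assert (0 <= q) by nra.
    apply Rabs_def2 in Hdel. lra.
  - destruct (Hd l ltac:(lra)) as [del Hdel].
    set (h := (Rmin del r / 2)).
    assert (Hm : 0 < Rmin del r) by (apply Rmin_pos; [apply cond_pos|lra]).
    assert (Hh : h <> 0) by (unfold h; lra).
    assert (Hha : Rabs h < del).
    { unfold h. rewrite Rabs_right by lra. pose proof (Rmin_l del r). lra. }
    specialize (Hdel h Hh Hha).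
    assert (k (x + h) <= k x). { apply Hmax. replace (x + h - x) with h by ring.
      unfold h. rewrite Rabs_right by lra. pose proof (Rmin_r del r). lra. }
    set (q := (k (x + h) - k x) / h) in *.
    assert (q * h = k (x + h) - k x) by (unfold q; field; auto).
    assert (0 < h) by (unfold h; lra).
    assert (q <= 0) by nra.
    apply Rabs_def2 in Hdel. lra.
Qed.

Lemma dpl_eq f x l l' : derivable_pt_lim f x l -> l = l' -> derivable_pt_lim f x l'.
Proof. intros H <-; auto. Qed.
Lemma dpl_plus f g x a b : derivable_pt_lim f x a -> derivable_pt_lim g x b ->
  derivable_pt_lim (fun y => f y + g y) x (a + b).
Proof. intros; apply (derivable_pt_lim_plus f g); auto. Qed.
Lemma dpl_minus f g x a b : derivable_pt_lim f x a -> derivable_pt_lim g x b ->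
  derivable_pt_lim (fun y => f y - g y) x (a - b).
Proof. intros; apply (derivable_pt_lim_minus f g); auto. Qed.
Lemma dpl_mult f g x a b : derivable_pt_lim f x a -> derivable_pt_lim g x b ->
  derivable_pt_lim (fun y => f y * g y) x (a * g x + f x * b).
Proof. intros; apply (derivable_pt_lim_mult f g); auto. Qed.
Lemma dpl_const c x : derivable_pt_lim (fun _ => c) x 0.
Proof. apply (derivable_pt_lim_const c). Qed.
Lemma dpl_id x : derivable_pt_lim (fun y => y) x 1.
Proof. apply derivable_pt_lim_id. Qed.
Lemma dpl_comp f g x a b : derivable_pt_lim f x a -> derivable_pt_lim g (f x) b ->
  derivable_pt_lim (fun y => g (f y)) x (b * a).
Proof. intros H1 H2. exact (derivable_pt_lim_comp f g x a b H1 H2). Qed.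

Lemma dpl_shift f x c l : derivable_pt_lim f x l ->
  derivable_pt_lim (fun t => f (x + c * t)) 0 (l * c).
Proof.
  intros H. apply (dpl_comp (fun t => x + c * t) f 0 c l).
  - apply (dpl_eq _ _ (0 + c * 1)); [|ring]. apply dpl_plus; [apply dpl_const|].
    apply (dpl_eq _ _ (0 * 0 + c * 1)); [|ring]. apply dpl_mult; [apply dpl_const|apply dpl_id].
  - replace (x + c * 0) with x by ring. auto.
Qed.

Lemma dpl_ext_loc f g x l : (exists r, 0 < r /\ forall y, Rabs (y - x) < r -> f y = g y) ->
  derivable_pt_lim f x l -> derivable_pt_lim g x l.
Proof.
  intros [r [Hr He]] H eps Heps. destruct (H eps Heps) as [del Hd].
  assert (Hm : 0 < Rmin del r) by (apply Rmin_pos; [apply cond_pos|lra]).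
  exists (mkposreal _ Hm). intros h Hh Hha. simpl in Hha.
  pose proof (Rmin_l del r); pose proof (Rmin_r del r).
  rewrite <- (He (x + h)), <- (He x).
  - apply Hd; auto; lra.
  - unfold Rminus; rewrite Rplus_opp_r, Rabs_R0; lra.
  - replace (x + h - x) with h by ring. lra.
Qed.

Lemma dpl_ext f g x l : (forall y, f y = g y) -> derivable_pt_lim f x l -> derivable_pt_lim g x l.
Proof. intros He. apply dpl_ext_loc. exists 1; split; [lra|auto]. Qed.

Lemma dpl_shiftp f x l : derivable_pt_lim f x l -> derivable_pt_lim (fun t => f (x + t)) 0 l.
Proof. intros H. apply (dpl_ext (fun t => f (x + 1 * t))). intros; f_equal; ring.
  apply (dpl_eq _ _ (l * 1)); [apply dpl_shift; auto|ring]. Qed.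
Lemma dpl_shiftm f x l : derivable_pt_lim f x l -> derivable_pt_lim (fun t => f (x - t)) 0 (- l).
Proof. intros H. apply (dpl_ext (fun t => f (x + (-1) * t))). intros; f_equal; ring.
  apply (dpl_eq _ _ (l * -1)); [apply dpl_shift; auto|ring]. Qed.

Lemma opt_cond d a z p i j li lj : is_entmax d a z p -> i <> j -> (i < d)%nat -> (j < d)%nat ->
  0 < p i -> 0 < p j ->
  derivable_pt_lim (Tpsi a) (p i) li -> derivable_pt_lim (Tpsi a) (p j) lj ->
  (z i - z j) + Tc a * (li - lj) = 0.
Proof.
  intros [Hs Hopt] Hij Hi Hj Hpi Hpj Hdi Hdj.
  set (K := fun t => t * (z i - z j) + Tc a * (Tpsi a (p i + t) - Tpsi a (p i) + Tpsi a (p j - t) - Tpsi a (p j))).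
  apply (extremum_deriv K 0).
  - exists (Rmin (p i) (p j)). split; [apply Rmin_pos; auto|].
    intros y Hy. rewrite Rminus_0_r in Hy. apply Rabs_def2 in Hy.
    pose proof (Rmin_l (p i) (p j)); pose proof (Rmin_r (p i) (p j)).
    pose proof (obj_pert d a z p i j y Hij Hi Hj) as E.
    unfold K. rewrite Rmult_0_l, !Rplus_0_r, !Rminus_0_r.
    replace (Tpsi a (p i) - Tpsi a (p i) + Tpsi a (p j) - Tpsi a (p j)) with 0 by ring.
    rewrite Rmult_0_r, Rplus_0_r.
    assert (entmax_obj d a z (pert p i j y) <= entmax_obj d a z p).
    { apply Hopt. apply pert_simplex; auto; lra. }
    lra.
  - unfold K. eapply dpl_eq.
    + apply dpl_plus.
      * apply dpl_mult; [apply dpl_id|apply dpl_const].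
      * apply dpl_mult; [apply dpl_const|].
        apply dpl_minus; [apply dpl_plus; [apply dpl_minus|]|apply dpl_const].
        -- apply dpl_shiftp. exact Hdi.
        -- apply dpl_const.
        -- apply dpl_shiftm. exact Hdj.
    + simpl. ring.
Qed.

Lemma loc_pos x : 0 < x -> exists r, 0 < r /\ forall y, Rabs (y - x) < r -> 0 < y.
Proof. intros H. exists x. split; auto. intros y Hy. apply Rabs_def2 in Hy. lra. Qed.

Lemma d_xlogx x : 0 < x -> derivable_pt_lim xlogx x (ln x + 1).
Proof.
  intros H. apply (dpl_ext_loc (fun y => y * ln y)).
  - destruct (loc_pos x H) as [r [Hr Hy]]. exists r; split; auto. intros y Hy'.
    unfold xlogx. destruct (Rlt_dec 0 y); auto. specialize (Hy y Hy'). lra.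
  - apply (dpl_eq _ _ (1 * ln x + x * / x)). apply dpl_mult; [apply dpl_id|apply derivable_pt_lim_ln; auto].
    field. lra.
Qed.

Lemma d_rpow x a : 0 < x -> derivable_pt_lim (fun y => rpow y a) x (a * Rpower x (a - 1)).
Proof.
  intros H. apply (dpl_ext_loc (fun y => Rpower y a)).
  - destruct (loc_pos x H) as [r [Hr Hy]]. exists r; split; auto. intros y Hy'.
    unfold rpow. destruct (Rlt_dec 0 y); auto. specialize (Hy y Hy'). lra.
  - apply derivable_pt_lim_power; auto.
Qed.

Lemma cond_gt d a z p i j : 1 < a -> is_entmax d a z p -> (i < d)%nat -> (j < d)%nat ->
  0 < p i -> 0 < p j ->
  z i - z j = (Rpower (p i) (a - 1) - Rpower (p j) (a - 1)) / (a - 1).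
Proof.
  intros Ha He Hi Hj Hpi Hpj.
  destruct (Nat.eq_dec i j). { subst. field. lra. }
  assert (Hd : forall x, 0 < x -> derivable_pt_lim (Tpsi a) x (1 - a * Rpower x (a - 1))).
  { intros x Hx. unfold Tpsi. destruct (Req_EM_T a 1); [lra|].
    apply dpl_minus; [apply dpl_id|apply d_rpow; auto]. }
  pose proof (opt_cond d a z p i j _ _ He n Hi Hj Hpi Hpj (Hd _ Hpi) (Hd _ Hpj)) as C.
  unfold Tc in C. destruct (Req_EM_T a 1); [lra|].
  apply (Rmult_eq_reg_r (a - 1)); [|lra].
  replace ((Rpower (p i) (a - 1) - Rpower (p j) (a - 1)) / (a - 1) * (a - 1)) with
    (Rpower (p i) (a - 1) - Rpower (p j) (a - 1)) by (field; lra).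
  replace (/ (a * (a - 1)) * (1 - a * Rpower (p i) (a - 1) - (1 - a * Rpower (p j) (a - 1))))
   with (- (Rpower (p i) (a - 1) - Rpower (p j) (a - 1)) / (a - 1)) in C by (field; lra).
  assert (E: (Rpower (p i) (a - 1) - Rpower (p j) (a - 1)) / (a - 1) = z i - z j) by lra.
  rewrite <- E. field. lra.
Qed.

Lemma cond_eq1 d z p i j : is_entmax d 1 z p -> (i < d)%nat -> (j < d)%nat ->
  0 < p i -> 0 < p j -> z i - z j = ln (p i) - ln (p j).
Proof.
  intros He Hi Hj Hpi Hpj.
  destruct (Nat.eq_dec i j). { subst. ring. }
  assert (Hd : forall x, 0 < x -> derivable_pt_lim (Tpsi 1) x (ln x + 1)).
  { intros x Hx. unfold Tpsi. destruct (Req_EM_T 1 1); [|lra]. apply d_xlogx; auto. }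
  pose proof (opt_cond d 1 z p i j _ _ He n Hi Hj Hpi Hpj (Hd _ Hpi) (Hd _ Hpj)) as C.
  unfold Tc in C. destruct (Req_EM_T 1 1); [|lra]. lra.
Qed.

Lemma full_support d z p k : is_entmax d 1 z p -> (k < d)%nat -> 0 < p k.
Proof.
  intros He Hk. pose proof He as [[Hnn Hsum] Hopt].
  destruct (Rle_lt_dec (p k) 0) as [Hle|]; auto. exfalso.
  assert (Hp0 : p k = 0) by (pose proof (Hnn k Hk); lra).
  destruct (rsum_exists_pos d p Hsum) as [m [Hm Hpm]].
  assert (Hkm : k <> m) by (intro; subst; lra).
  set (M := Rabs (z k - z m) + Rabs (ln (p m / 2)) + 2).
  set (t := Rmin (p m / 2) (exp (- M))).
  assert (Ht0 : 0 < t) by (apply Rmin_pos; [lra|apply exp_pos]).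
  assert (Ht1 : t <= p m / 2) by apply Rmin_l.
  assert (Ht2 : ln t <= - M).
  { destruct (Rle_lt_or_eq_dec t (exp (- M)) (Rmin_r _ _)) as [L|L].
    - rewrite <- (ln_exp (- M)). left. apply ln_increasing; auto.
    - rewrite L, ln_exp. lra. }
  pose proof (obj_pert d 1 z p k m t Hkm Hk Hm) as E.
  assert (Hle2 : entmax_obj d 1 z (pert p k m t) <= entmax_obj d 1 z p).
  { apply Hopt. apply pert_simplex; try split; auto; lra. }
  unfold Tc, Tpsi in E. destruct (Req_EM_T 1 1); [|lra].
  rewrite Hp0, Rplus_0_l in E.
  assert (X0 : xlogx 0 = 0) by (unfold xlogx; destruct (Rlt_dec 0 0); lra).
  assert (Xt : xlogx t = t * ln t) by (unfold xlogx; destruct (Rlt_dec 0 t); lra).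
  destruct (MVT_cor2 xlogx (fun x => ln x + 1) (p m - t) (p m)) as [c [Hc1 Hc2]]; [lra| |].
  { intros c Hc. apply d_xlogx. lra. }
  assert (Hlc : ln (p m / 2) < ln c) by (apply ln_increasing; lra).
  rewrite X0, Xt in E.
  replace (p m - (p m - t)) with t in Hc1 by ring.
  assert (H0 : t * (z k - z m) + -1 * (t * ln t - 0 + xlogx (p m - t) - xlogx (p m)) <= 0) by lra.
  replace (t * (z k - z m) + -1 * (t * ln t - 0 + xlogx (p m - t) - xlogx (p m))) with
    (t * ((z k - z m) - ln t + (ln c + 1))) in H0 by lra.
  assert (0 < (z k - z m) - ln t + (ln c + 1)).
  { pose proof (Rle_abs (- (z k - z m))). rewrite Rabs_Ropp in H.
    pose proof (Rle_abs (- ln (p m / 2))). rewrite Rabs_Ropp in H1. unfold M in Ht2. lra. }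
  nra.
Qed.

Definition rlim (F : R -> R) (L : R) : Prop :=
  forall eps, 0 < eps -> exists delta, 0 < delta /\
    forall h, 0 < h < delta -> Rabs (F h - L) < eps.

Lemma rlim_iff F L : rlim F L <-> limit1_in F (fun h => 0 < h) L 0.
Proof.
  unfold rlim, limit1_in, limit_in; simpl; unfold Rdist. split.
  - intros H eps Heps. destruct (H eps Heps) as [del [Hd H']]. exists del; split; [lra|].
    intros x [Hx Hx']. apply H'. rewrite Rminus_0_r, Rabs_right in Hx' by lra. lra.
  - intros H eps Heps. destruct (H eps ltac:(lra)) as [del [Hd H']]. exists del; split; [lra|].
    intros x Hx. apply H'. split; [lra|]. rewrite Rminus_0_r, Rabs_right by lra. lra.
Qed.

Lemma rlim_plus F G a b : rlim F a -> rlim G b -> rlim (fun h => F h + G h) (a + b).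
Proof. rewrite !rlim_iff. apply limit_plus. Qed.
Lemma rlim_minus F G a b : rlim F a -> rlim G b -> rlim (fun h => F h - G h) (a - b).
Proof. rewrite !rlim_iff. apply limit_minus. Qed.
Lemma rlim_mult F G a b : rlim F a -> rlim G b -> rlim (fun h => F h * G h) (a * b).
Proof. rewrite !rlim_iff. apply limit_mul. Qed.
Lemma rlim_const c : rlim (fun _ => c) c.
Proof. intros eps He. exists 1; split; [lra|]. intros. unfold Rminus; rewrite Rplus_opp_r, Rabs_R0; lra. Qed.
Lemma rlim_id : rlim (fun h => h) 0.
Proof. intros eps He. exists eps; split; [lra|]. intros h Hh. rewrite Rminus_0_r, Rabs_right; lra. Qed.
Lemma rlim_unique F a b : rlim F a -> rlim F b -> a = b.
Proof. rewrite !rlim_iff. apply single_limit. intros alp Ha. exists (alp / 2). split; [lra|].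
  unfold Rdist. rewrite Rminus_0_r, Rabs_right; lra. Qed.
Lemma rlim_ext F G L : (exists r, 0 < r /\ forall h, 0 < h < r -> F h = G h) -> rlim F L -> rlim G L.
Proof.
  intros [r [Hr He]] H eps Heps. destruct (H eps Heps) as [del [Hd H']].
  exists (Rmin del r). split; [apply Rmin_pos; lra|]. intros h Hh.
  pose proof (Rmin_l del r); pose proof (Rmin_r del r).
  rewrite <- He by lra. apply H'. lra.
Qed.
Lemma rlim_eq F a b : rlim F a -> a = b -> rlim F b.
Proof. intros H <-; auto. Qed.

Lemma rlim_comp F G L : rlim F L ->
  (forall eps, 0 < eps -> exists del, 0 < del /\ forall y, Rabs (y - L) < del -> Rabs (G y - G L) < eps) ->
  rlim (fun h => G (F h)) (G L).
Proof.
  intros HF HG eps Heps. destruct (HG eps Heps) as [d1 [Hd1 H1]].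
  destruct (HF d1 Hd1) as [d2 [Hd2 H2]]. exists d2; split; auto.
Qed.

Lemma rlim_pos F L : rlim F L -> 0 < L -> exists r, 0 < r /\ forall h, 0 < h < r -> 0 < F h.
Proof. intros H HL. destruct (H L HL) as [d [Hd H']]. exists d; split; auto.
  intros h Hh. specialize (H' h Hh). apply Rabs_def2 in H'. lra. Qed.

Lemma rd_cont f x l : right_deriv f x l -> rlim (fun h => f (x + h)) (f x).
Proof.
  intros H. apply (rlim_ext (fun h => f x + h * ((f (x + h) - f x) / h))).
  - exists 1; split; [lra|]. intros h Hh. field. lra.
  - apply (rlim_eq _ (f x + 0 * l)); [|ring]. apply rlim_plus; [apply rlim_const|].
    apply rlim_mult; [apply rlim_id|exact H].
Qed.

Lemma dpl_rd f x l : derivable_pt_lim f x l -> right_deriv f x l.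
Proof.
  intros H eps Heps. destruct (H eps Heps) as [del Hd]. exists del. split; [apply cond_pos|].
  intros h Hh. apply Hd; [lra|]. rewrite Rabs_right; lra.
Qed.

Definition dq (G : R -> R) (y0 G' : R) (y : R) : R :=
  if Req_EM_T y y0 then G' else (G y - G y0) / (y - y0).

Lemma dq_eq G y0 G' y : G y - G y0 = dq G y0 G' y * (y - y0).
Proof. unfold dq. destruct (Req_EM_T y y0). subst; ring. field. lra. Qed.

Lemma dq_cont G y0 G' : derivable_pt_lim G y0 G' ->
  forall eps, 0 < eps -> exists del, 0 < del /\ forall y, Rabs (y - y0) < del ->
    Rabs (dq G y0 G' y - dq G y0 G' y0) < eps.
Proof.
  intros H eps Heps. destruct (H eps Heps) as [del Hd]. exists del. split; [apply cond_pos|].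
  intros y Hy. unfold dq. destruct (Req_EM_T y0 y0); [|lra].
  destruct (Req_EM_T y y0). { unfold Rminus; rewrite Rplus_opp_r, Rabs_R0; lra. }
  specialize (Hd (y - y0) ltac:(lra) Hy). replace (y0 + (y - y0)) with y in Hd by ring. auto.
Qed.

Lemma rd_chain f G x l G' : right_deriv f x l -> derivable_pt_lim G (f x) G' ->
  right_deriv (fun y => G (f y)) x (G' * l).
Proof.
  intros Hf HG. unfold right_deriv. fold (rlim (fun h => (G (f (x + h)) - G (f x)) / h) (G' * l)).
  apply (rlim_ext (fun h => dq G (f x) G' (f (x + h)) * ((f (x + h) - f x) / h))).
  - exists 1; split; [lra|]. intros h Hh. rewrite (dq_eq G (f x) G' (f (x + h))). field. lra.
  - apply rlim_mult; [|exact Hf].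
    apply (rlim_eq _ (dq G (f x) G' (f x))).
    + apply (rlim_comp (fun h => f (x + h)) (dq G (f x) G')); [apply (rd_cont f x l); auto|]. apply dq_cont; auto.
    + unfold dq. destruct (Req_EM_T (f x) (f x)); [auto|lra].
Qed.

Lemma dpl_rsum (F : R -> nat -> R) (G : nat -> R) x n :
  (forall k, (k < n)%nat -> derivable_pt_lim (fun a => F a k) x (G k)) ->
  derivable_pt_lim (fun a => rsum n (F a)) x (rsum n G).
Proof. induction n; intros H; simpl. apply dpl_const.
  apply dpl_plus; [apply IHn; intros; apply H; lia|apply H; lia]. Qed.

Lemma rsum_ge_term n f m : (forall k, (k < n)%nat -> 0 <= f k) -> (m < n)%nat -> f m <= rsum n f.
Proof. induction n; intros H Hm; [lia|]. simpl.
  assert (0 <= rsum n f) by (apply rsum_nonneg; intros; apply H; lia).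
  destruct (Nat.eq_dec m n). subst; lra.
  assert (f m <= rsum n f) by (apply IHn; [intros; apply H; lia|lia]).
  assert (0 <= f n) by (apply H; lia). lra. Qed.

Lemma d_rpow_var f x l : derivable_pt_lim f x l -> 0 < f x ->
  derivable_pt_lim (fun a => Rpower (f a) (a - 1)) x
    (Rpower (f x) (x - 1) * (ln (f x) + (x - 1) * l / f x)).
Proof.
  intros H Hp. unfold Rpower.
  apply (dpl_comp (fun a => (a - 1) * ln (f a)) exp).
  2:{ apply derivable_pt_lim_exp. }
  apply (dpl_eq _ _ ((1 - 0) * ln (f x) + (x - 1) * (/ f x * l))).
  - apply (dpl_mult (fun a => a - 1) (fun a => ln (f a))). apply dpl_minus; [apply dpl_id|apply dpl_const].
    apply (dpl_comp f ln); auto. apply derivable_pt_lim_ln; auto.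
  - field. lra.
Qed.

Lemma dpl_opp f x l : derivable_pt_lim f x l -> derivable_pt_lim (fun y => - f y) x (- l).
Proof. intros H. apply (derivable_pt_lim_opp f); auto. Qed.

Section GT.
Variables (d : nat) (z : nat -> R) (alpha : R) (P : R -> nat -> R) (g : nat -> R).
Hypothesis hd : (1 <= d)%nat.
Hypothesis ha : 1 < alpha.
Hypothesis hP : forall a, 1 <= a -> is_entmax d a z (P a).
Hypothesis hg : forall i, (i < d)%nat -> derivable_pt_lim (fun a => P a i) alpha (g i).

Lemma gt_off i : (i < d)%nat -> P alpha i = 0 -> g i = 0.
Proof.
  intros Hi H0. assert (- g i = 0); [|lra].
  apply (extremum_deriv (fun a => - P a i) alpha).
  - exists (alpha - 1). split; [lra|]. intros y Hy. apply Rabs_def2 in Hy.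
    destruct (hP y ltac:(lra)) as [[Hnn _] _]. specialize (Hnn i Hi). lra.
  - apply dpl_opp. apply hg; auto.
Qed.

Lemma gt_sum : rsum d g = 0.
Proof.
  pose proof (dpl_rsum P g alpha d hg) as H.
  assert (H1 : derivable_pt_lim (fun a => rsum d (P a)) alpha 0).
  { apply (dpl_ext_loc (fun _ => 1)); [|apply dpl_const].
    exists (alpha - 1). split; [lra|]. intros y Hy. apply Rabs_def2 in Hy.
    destruct (hP y ltac:(lra)) as [[_ Hs] _]. auto. }
  exact (uniqueness_limite _ _ _ _ H H1).
Qed.

Definition Ck (k : nat) : R :=
  Rpower (P alpha k) (alpha - 1) * (ln (P alpha k) + (alpha - 1) * g k / P alpha k - / (alpha - 1)).

Lemma gt_C i m : (i < d)%nat -> (m < d)%nat -> 0 < P alpha i -> 0 < P alpha m -> Ck i = Ck m.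
Proof.
  intros Hi Hm Hpi Hpm.
  pose proof (d_rpow_var _ _ _ (hg i Hi) Hpi) as Di.
  pose proof (d_rpow_var _ _ _ (hg m Hm) Hpm) as Dm.
  set (FF := fun a => Rpower (P a i) (a - 1) - Rpower (P a m) (a - 1) - (a - 1) * (z i - z m)).
  assert (DF : derivable_pt_lim FF alpha
    (Rpower (P alpha i) (alpha - 1) * (ln (P alpha i) + (alpha - 1) * g i / P alpha i)
     - Rpower (P alpha m) (alpha - 1) * (ln (P alpha m) + (alpha - 1) * g m / P alpha m)
     - (z i - z m))).
  { simpl in Di, Dm. unfold FF.
    apply (dpl_minus (fun a => Rpower (P a i) (a - 1) - Rpower (P a m) (a - 1)) (fun a => (a - 1) * (z i - z m))).
    apply (dpl_minus (fun a => Rpower (P a i) (a - 1)) (fun a => Rpower (P a m) (a - 1))); auto.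
    apply (dpl_eq _ _ ((1 - 0) * (z i - z m) + (alpha - 1) * 0)); [|ring].
    apply (dpl_mult (fun a => a - 1) (fun _ => z i - z m)); [apply dpl_minus; [apply dpl_id|apply dpl_const]|apply dpl_const]. }
  assert (Hz : forall a, 1 < a -> 0 < P a i -> 0 < P a m ->
     z i - z m = (Rpower (P a i) (a - 1) - Rpower (P a m) (a - 1)) / (a - 1)).
  { intros a Ha Hai Ham. apply (cond_gt d); auto. apply hP; lra. }
  assert (FF0 : forall a, 1 < a -> 0 < P a i -> 0 < P a m -> FF a = 0).
  { intros a Ha Hai Ham. unfold FF. rewrite (Hz a) by auto. field. lra. }
  destruct (rlim_pos _ _ (rd_cont _ _ _ (dpl_rd _ _ _ (hg i Hi))) Hpi) as [r1 [Hr1 H1]].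
  destruct (rlim_pos _ _ (rd_cont _ _ _ (dpl_rd _ _ _ (hg m Hm))) Hpm) as [r2 [Hr2 H2]].
  assert (R0 : right_deriv FF alpha 0).
  { unfold right_deriv. fold (rlim (fun h => (FF (alpha + h) - FF alpha) / h) 0).
    apply (rlim_ext (fun _ => 0)); [|apply rlim_const].
    exists (Rmin r1 r2). split; [apply Rmin_pos; auto|]. intros h Hh.
    pose proof (Rmin_l r1 r2); pose proof (Rmin_r r1 r2).
    assert (0 < P (alpha + h) i) by (apply H1; lra).
    assert (0 < P (alpha + h) m) by (apply H2; lra).
    rewrite (FF0 alpha) by auto. rewrite (FF0 (alpha + h)) by (auto; lra).
    unfold Rdiv; ring. }
  pose proof (rlim_unique _ _ _ (dpl_rd _ _ _ DF) R0) as E.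
  rewrite (Hz alpha) in E by auto. unfold Ck.
  apply (Rplus_eq_reg_r (- (Rpower (P alpha m) (alpha - 1) *
      (ln (P alpha m) + (alpha - 1) * g m / P alpha m - / (alpha - 1))))).
  rewrite Rplus_opp_r. rewrite <- E. field. lra.
Qed.

Definition wk (k : nat) : R := if Rlt_dec 0 (P alpha k) then Rpower (P alpha k) (2 - alpha) else 0.

Lemma gt_form m i : (m < d)%nat -> 0 < P alpha m -> (i < d)%nat ->
  g i = wk i * (Ck m / (alpha - 1)) + P alpha i / ((alpha - 1) ^ 2) + hneg (P alpha) i / (alpha - 1).
Proof.
  intros Hm Hpm Hi. unfold wk, hneg, xlogx. destruct (Rlt_dec 0 (P alpha i)) as [Hpi|Hpi].
  - rewrite <- (gt_C i m) by auto. unfold Ck.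
    set (p := P alpha i). set (Rr := Rpower p (alpha - 1)). set (w := Rpower p (2 - alpha)).
    assert (Hrw : Rr * w = p).
    { unfold Rr, w. rewrite <- Rpower_plus. replace (alpha - 1 + (2 - alpha)) with 1 by ring.
      apply Rpower_1. auto. }
    replace (w * (Rr * (ln p + (alpha - 1) * g i / p - / (alpha - 1)) / (alpha - 1)))
      with ((Rr * w) * (ln p + (alpha - 1) * g i / p - / (alpha - 1)) / (alpha - 1)) by (unfold Rdiv; ring).
    rewrite Hrw. fold p. field. unfold p; split; lra.
  - assert (P alpha i = 0).
    { destruct (hP alpha ltac:(lra)) as [[Hnn _] _]. specialize (Hnn i Hi). lra. }
    rewrite gt_off by auto. rewrite H. field. lra.
Qed.

Lemma gt_main i : (i < d)%nat ->
  g i = (P alpha i - ptilde d alpha (P alpha) i) / ((alpha - 1) ^ 2)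
        + (hneg (P alpha) i - ptilde d alpha (P alpha) i * rsum d (fun j => hneg (P alpha) j))
          / (alpha - 1).
Proof.
  intros Hi. destruct (hP alpha ltac:(lra)) as [[Hnn Hs] _].
  destruct (rsum_exists_pos d _ Hs) as [m [Hm Hpm]].
  set (K := Ck m / (alpha - 1)).
  set (W := rsum d wk). set (H := rsum d (fun j => hneg (P alpha) j)).
  assert (Hw : forall k, (k < d)%nat -> 0 <= wk k).
  { intros k _. unfold wk. destruct (Rlt_dec 0 (P alpha k)); [left; apply exp_pos|lra]. }
  assert (HW : 0 < W).
  { apply (Rlt_le_trans _ (wk m)); [|apply rsum_ge_term; auto].
    unfold wk. destruct (Rlt_dec 0 (P alpha m)); [apply exp_pos|lra]. }
  assert (Hsum : 0 = K * W + 1 / ((alpha - 1) ^ 2) + H / (alpha - 1)).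
  { rewrite <- gt_sum.
    rewrite (rsum_ext d g (fun k => (K * wk k + (/ ((alpha - 1) ^ 2)) * P alpha k) + / (alpha - 1) * hneg (P alpha) k)).
    2:{ intros k Hk. rewrite (gt_form m k) by auto. unfold K. field. lra. }
    rewrite !rsum_plus, !rsum_scal. change (rsum d (fun k => P alpha k)) with (rsum d (P alpha)).
    rewrite Hs. replace (rsum d (hneg (P alpha))) with H by reflexivity. fold W. field. lra. }
  assert (Kv : K = - (1 / ((alpha - 1) ^ 2) + H / (alpha - 1)) / W).
  { apply (Rmult_eq_reg_r W); [|lra]. replace (- (1 / ((alpha - 1) ^ 2) + H / (alpha - 1)) / W * W) with (- (1 / ((alpha - 1) ^ 2) + H / (alpha - 1))) by (field; lra). lra. }
  assert (Hpt : ptilde d alpha (P alpha) i = wk i / W).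
  { unfold ptilde, W, wk. destruct (Rlt_dec 0 (P alpha i)); [auto|]. unfold Rdiv; ring. }
  rewrite Hpt, (gt_form m i) by auto. fold K. fold H. rewrite Kv. field. split; lra.
Qed.

End GT.

Lemma mvt_bound (psi psi' : R -> R) K n : 0 <= K ->
  (forall t, derivable_pt_lim psi t (psi' t)) -> psi 0 = 0 ->
  (forall t, Rabs t <= 1 -> Rabs (psi' t) <= K * Rabs t ^ n) ->
  forall x, Rabs x <= 1 -> Rabs (psi x) <= K * Rabs x ^ (S n).
Proof.
  intros HK Hd H0 Hb x Hx. simpl.
  assert (Hpn : forall y, 0 <= Rabs y ^ n) by (intros; apply pow_le, Rabs_pos).
  destruct (Rtotal_order x 0) as [Hx0|[Hx0|Hx0]].
  - destruct (MVT_cor2 psi psi' x 0 Hx0 (fun c _ => Hd c)) as [c [Hc1 Hc2]].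
    rewrite H0 in Hc1. replace (psi x) with (- (psi' c * (0 - x))) by lra.
    rewrite Rabs_Ropp, Rabs_mult. replace (0 - x) with (- x) by ring. rewrite Rabs_Ropp.
    assert (Hcx : Rabs c ^ n <= Rabs x ^ n).
    { apply pow_incr. split; [apply Rabs_pos|]. rewrite !Rabs_left by lra. lra. }
    assert (Rabs (psi' c) <= K * Rabs x ^ n).
    { apply (Rle_trans _ (K * Rabs c ^ n)); [apply Hb; rewrite Rabs_left in *; lra|].
      apply Rmult_le_compat_l; auto. }
    pose proof (Rabs_pos x). nra.
  - subst. rewrite H0, Rabs_R0. pose proof (Hpn 0). rewrite Rabs_R0 in H. nra.
  - destruct (MVT_cor2 psi psi' 0 x Hx0 (fun c _ => Hd c)) as [c [Hc1 Hc2]].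
    rewrite H0 in Hc1. replace (psi x) with (psi' c * (x - 0)) by lra.
    rewrite Rabs_mult. rewrite Rminus_0_r.
    assert (Hcx : Rabs c ^ n <= Rabs x ^ n).
    { apply pow_incr. split; [apply Rabs_pos|]. rewrite !Rabs_right by lra. lra. }
    assert (Rabs (psi' c) <= K * Rabs x ^ n).
    { apply (Rle_trans _ (K * Rabs c ^ n)); [apply Hb; rewrite Rabs_right in *; lra|].
      apply Rmult_le_compat_l; auto. }
    pose proof (Rabs_pos x). nra.
Qed.

Lemma exp_bound3 x : Rabs x <= 1 -> Rabs (exp x - 1 - x - x * x / 2) <= 3 * Rabs x ^ 3.
Proof.
  intros Hx.
  assert (B0 : forall t, Rabs t <= 1 -> Rabs (exp t) <= 3 * Rabs t ^ 0).
  { intros t Ht. simpl. rewrite Rabs_right by (left; apply exp_pos).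
    assert (exp t <= exp 1). { pose proof (Rle_abs t). destruct (Rle_lt_or_eq_dec t 1); [lra|..].
      - left; apply exp_increasing; auto.
      - subst; lra. }
    pose proof exp_le_3. lra. }
  assert (B1 := mvt_bound (fun t => exp t - 1) exp 3 0 ltac:(lra)).
  assert (B1' : forall t, Rabs t <= 1 -> Rabs (exp t - 1) <= 3 * Rabs t ^ 1).
  { apply B1; auto. intros t. apply (dpl_eq _ _ (exp t - 0)); [|ring].
    apply dpl_minus; [apply derivable_pt_lim_exp|apply dpl_const]. rewrite exp_0; ring. }
  assert (B2 : forall t, Rabs t <= 1 -> Rabs (exp t - 1 - t) <= 3 * Rabs t ^ 2).
  { apply (mvt_bound (fun t => exp t - 1 - t) (fun t => exp t - 1) 3 1); auto; [lra| |].
    - intros t. apply dpl_minus; [|apply dpl_id].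
      apply (dpl_eq _ _ (exp t - 0)); [|ring]. apply dpl_minus; [apply derivable_pt_lim_exp|apply dpl_const].
    - rewrite exp_0; ring. }
  apply (mvt_bound (fun t => exp t - 1 - t - t * t / 2) (fun t => exp t - 1 - t) 3 2); auto; [lra| |].
  - intros t. apply (dpl_eq _ _ ((exp t - 0) - 1 - (1 * t + t * 1) * / 2)); [|field].
    apply dpl_minus; [apply dpl_minus; [apply dpl_minus; [apply derivable_pt_lim_exp|apply dpl_const]|apply dpl_id]|].
    apply (dpl_eq _ _ ((1 * t + t * 1) * / 2 + (t * t) * 0)); [|ring].
    apply (dpl_mult (fun t => t * t) (fun _ => / 2)); [apply dpl_mult; apply dpl_id|apply dpl_const].
  - rewrite exp_0; field.
Qed.

Definition Phi (x : R) : R := if Req_EM_T x 0 then 0 else (exp x - 1 - x - x * x / 2) / (x * x).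

Lemma exp_expand x : exp x = 1 + x + x * x / 2 + Phi x * (x * x).
Proof. unfold Phi. destruct (Req_EM_T x 0). subst; rewrite exp_0; field. field. auto. Qed.

Lemma Phi_cont : forall eps, 0 < eps -> exists del, 0 < del /\ forall y, Rabs (y - 0) < del ->
  Rabs (Phi y - Phi 0) < eps.
Proof.
  intros eps He. exists (Rmin 1 (eps / 3)). split; [apply Rmin_pos; lra|]. intros y Hy.
  rewrite Rminus_0_r in Hy. pose proof (Rmin_l 1 (eps / 3)); pose proof (Rmin_r 1 (eps / 3)).
  unfold Phi at 2. destruct (Req_EM_T 0 0); [|lra]. rewrite Rminus_0_r.
  unfold Phi. destruct (Req_EM_T y 0). { rewrite Rabs_R0; lra. }
  pose proof (exp_bound3 y ltac:(lra)) as B.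
  assert (Hyy : 0 < Rabs y) by (apply Rabs_pos_lt; auto).
  unfold Rdiv. rewrite Rabs_mult, Rabs_inv, Rabs_mult.
  simpl in B. apply (Rmult_le_compat_r (/ (Rabs y * Rabs y))) in B;
    [|left; apply Rinv_0_lt_compat; nra].
  replace (3 * (Rabs y * (Rabs y * (Rabs y * 1))) * / (Rabs y * Rabs y)) with (3 * Rabs y) in B
    by (field; lra).
  unfold Rdiv in B. lra.
Qed.

Lemma rd_plus f1 f2 x a b : right_deriv f1 x a -> right_deriv f2 x b ->
  right_deriv (fun y => f1 y + f2 y) x (a + b).
Proof.
  intros H1 H2. unfold right_deriv in *.
  fold (rlim (fun h => (f1 (x + h) - f1 x) / h) a) in H1.
  fold (rlim (fun h => (f2 (x + h) - f2 x) / h) b) in H2.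
  fold (rlim (fun h => (f1 (x + h) + f2 (x + h) - (f1 x + f2 x)) / h) (a + b)).
  apply (rlim_ext (fun h => (f1 (x + h) - f1 x) / h + (f2 (x + h) - f2 x) / h)).
  - exists 1; split; [lra|]. intros h Hh. field. lra.
  - apply rlim_plus; auto.
Qed.

Lemma rd_const c x : right_deriv (fun _ => c) x 0.
Proof. unfold right_deriv. fold (rlim (fun h => (c - c) / h) 0).
  apply (rlim_ext (fun _ => 0)); [|apply rlim_const]. exists 1; split; [lra|].
  intros h Hh. field. lra. Qed.

Lemma rd_rsum (F : R -> nat -> R) (G : nat -> R) x n :
  (forall k, (k < n)%nat -> right_deriv (fun a => F a k) x (G k)) ->
  right_deriv (fun a => rsum n (F a)) x (rsum n G).
Proof. induction n; intros H; simpl. apply rd_const.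
  apply rd_plus; [apply IHn; intros; apply H; lia|apply H; lia]. Qed.

Section EQ1.
Variables (d : nat) (z : nat -> R) (P : R -> nat -> R) (g : nat -> R).
Hypothesis hd : (1 <= d)%nat.
Hypothesis hP : forall a, 1 <= a -> is_entmax d a z (P a).
Hypothesis hg : forall i, (i < d)%nat -> right_deriv (fun a => P a i) 1 (g i).

Lemma eq_pos i : (i < d)%nat -> 0 < P 1 i.
Proof. intros Hi. apply (full_support d z); auto. apply hP; lra. Qed.

Lemma eq_sum : rsum d g = 0.
Proof.
  pose proof (rd_rsum P g 1 d hg) as H.
  assert (H1 : right_deriv (fun a => rsum d (P a)) 1 0).
  { unfold right_deriv. fold (rlim (fun h => (rsum d (P (1 + h)) - rsum d (P 1)) / h) 0).
    apply (rlim_ext (fun _ => 0)); [|apply rlim_const]. exists 1; split; [lra|].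
    intros h Hh. destruct (hP (1 + h) ltac:(lra)) as [[_ E1] _].
    destruct (hP 1 ltac:(lra)) as [[_ E2] _]. rewrite E1, E2. field. lra. }
  exact (rlim_unique _ _ _ H H1).
Qed.

Lemma eq_key i j : (i < d)%nat -> (j < d)%nat ->
  / P 1 i * g i - / P 1 j * g j + (ln (P 1 i) * ln (P 1 i) - ln (P 1 j) * ln (P 1 j)) / 2 = 0.
Proof.
  intros Hi Hj. pose proof (eq_pos i Hi) as Hpi. pose proof (eq_pos j Hj) as Hpj.
  pose proof (rd_chain _ ln 1 _ _ (hg i Hi) (derivable_pt_lim_ln _ Hpi)) as Di.
  pose proof (rd_chain _ ln 1 _ _ (hg j Hj) (derivable_pt_lim_ln _ Hpj)) as Dj.
  pose proof (rd_cont _ _ _ Di) as Ci. pose proof (rd_cont _ _ _ Dj) as Cj.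
  simpl in Ci, Cj.
  destruct (rlim_pos _ _ (rd_cont _ _ _ (hg i Hi)) Hpi) as [r1 [Hr1 H1]].
  destruct (rlim_pos _ _ (rd_cont _ _ _ (hg j Hj)) Hpj) as [r2 [Hr2 H2]].
  simpl in H1, H2.
  set (G := fun h =>
    (ln (P (1 + h) i) - ln (P 1 i)) / h - (ln (P (1 + h) j) - ln (P 1 j)) / h
    + (ln (P (1 + h) i) * ln (P (1 + h) i) - ln (P (1 + h) j) * ln (P (1 + h) j)) / 2
    + Phi (h * ln (P (1 + h) i)) * (ln (P (1 + h) i) * ln (P (1 + h) i))
    - Phi (h * ln (P (1 + h) j)) * (ln (P (1 + h) j) * ln (P (1 + h) j))).
  assert (HPhi : forall k, (k < d)%nat -> 0 < P 1 k ->
     rlim (fun h => ln (P (1 + h) k)) (ln (P 1 k)) ->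
     rlim (fun h => Phi (h * ln (P (1 + h) k))) 0).
  { intros k Hk Hpk Ck. apply (rlim_eq _ (Phi 0)).
    2:{ unfold Phi. destruct (Req_EM_T 0 0); lra. }
    apply (rlim_comp (fun h => h * ln (P (1 + h) k)) Phi 0); [|apply Phi_cont].
    apply (rlim_eq _ (0 * ln (P 1 k))); [|ring]. apply rlim_mult; [apply rlim_id|auto]. }
  assert (L1 : rlim G (/ P 1 i * g i - / P 1 j * g j
      + (ln (P 1 i) * ln (P 1 i) - ln (P 1 j) * ln (P 1 j)) / 2 + 0 * (ln (P 1 i) * ln (P 1 i))
      - 0 * (ln (P 1 j) * ln (P 1 j)))).
  { unfold G. repeat apply rlim_minus || apply rlim_plus.
    - exact Di.
    - exact Dj.
    - apply (rlim_mult _ (fun _ => / 2) _ (/ 2)); [|apply rlim_const].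
      apply rlim_minus; apply rlim_mult; auto.
    - apply rlim_mult; [apply HPhi; auto|apply rlim_mult; auto].
    - apply rlim_mult; [apply HPhi; auto|apply rlim_mult; auto]. }
  assert (L2 : rlim G 0).
  { apply (rlim_ext (fun _ => 0)); [|apply rlim_const].
    exists (Rmin r1 r2). split; [apply Rmin_pos; auto|]. intros h Hh.
    pose proof (Rmin_l r1 r2); pose proof (Rmin_r r1 r2).
    assert (Qi : 0 < P (1 + h) i) by (apply H1; lra).
    assert (Qj : 0 < P (1 + h) j) by (apply H2; lra).
    pose proof (cond_gt d (1 + h) z (P (1 + h)) i j ltac:(lra) (hP (1 + h) ltac:(lra)) Hi Hj Qi Qj) as E1.
    pose proof (cond_eq1 d z (P 1) i j (hP 1 ltac:(lra)) Hi Hj Hpi Hpj) as E2.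
    replace (1 + h - 1) with h in E1 by ring. unfold Rpower in E1.
    rewrite E2 in E1. rewrite (exp_expand (h * ln (P (1 + h) i))), (exp_expand (h * ln (P (1 + h) j))) in E1.
    unfold G. symmetry.
    set (ui := ln (P (1 + h) i)) in *. set (uj := ln (P (1 + h) j)) in *.
    set (Fi := Phi (h * ui)) in *. set (Fj := Phi (h * uj)) in *.
    set (li := ln (P 1 i)) in *. set (lj := ln (P 1 j)) in *.
    transitivity (((1 + h * ui + h * ui * (h * ui) / 2 + Fi * (h * ui * (h * ui)) -
        (1 + h * uj + h * uj * (h * uj) / 2 + Fj * (h * uj * (h * uj)))) / h - (li - lj)) / h).
    - field. lra.
    - rewrite E1. field. lra. }
  pose proof (rlim_unique _ _ _ L1 L2) as E. lra.
Qed.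

Lemma eq_main i : (i < d)%nat ->
  g i = (hneg (P 1) i * ln (P 1 i) - P 1 i * rsum d (fun j => hneg (P 1) j * ln (P 1 j))) / 2.
Proof.
  intros Hi. assert (H0 : (0 < d)%nat) by lia.
  set (c := / P 1 0 * g 0 + ln (P 1 0) * ln (P 1 0) / 2).
  assert (Hg : forall k, (k < d)%nat -> g k = c * P 1 k + (-1 / 2) * (P 1 k * (ln (P 1 k) * ln (P 1 k)))).
  { intros k Hk. pose proof (eq_key k 0 Hk H0) as E. pose proof (eq_pos k Hk).
    assert (Eg : g k = P 1 k * (/ P 1 k * g k)) by (field; lra).
    rewrite Eg.
    replace (/ P 1 k * g k) with (/ P 1 0 * g 0 + (ln (P 1 0) * ln (P 1 0) - ln (P 1 k) * ln (P 1 k)) / 2) by lra.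
    unfold c. field. pose proof (eq_pos 0 H0); lra. }
  set (S := rsum d (fun k => P 1 k * (ln (P 1 k) * ln (P 1 k)))).
  assert (Hs : 0 = c - S / 2).
  { rewrite <- eq_sum. rewrite (rsum_ext d g _ Hg). rewrite rsum_plus, !rsum_scal.
    destruct (hP 1 ltac:(lra)) as [[_ E] _]. change (rsum d (fun k => P 1 k)) with (rsum d (P 1)).
    rewrite E. unfold S. field. }
  assert (HS : rsum d (fun j => hneg (P 1) j * ln (P 1 j)) = -1 * S).
  { unfold S. rewrite <- rsum_scal. apply rsum_ext. intros k Hk. pose proof (eq_pos k Hk).
    unfold hneg, xlogx. destruct (Rlt_dec 0 (P 1 k)); [ring|lra]. }
  rewrite HS, (Hg i Hi). pose proof (eq_pos i Hi).
  unfold hneg, xlogx. destruct (Rlt_dec 0 (P 1 i)); [|lra].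
  replace c with (S / 2) by lra. field.
Qed.

End EQ1.

Theorem proposition1 (d : nat) (z : nat -> R) (alpha : R)
  (P : R -> nat -> R) (g : nat -> R)
  (hd : (1 <= d)%nat) (halpha : 1 <= alpha)
  (hP : forall a, 1 <= a -> is_entmax d a z (P a)) :
  (1 < alpha ->
     (forall i, (i < d)%nat -> derivable_pt_lim (fun a => P a i) alpha (g i)) ->
     forall i, (i < d)%nat ->
       g i = (P alpha i - ptilde d alpha (P alpha) i) / ((alpha - 1) ^ 2)
             + (hneg (P alpha) i
                - ptilde d alpha (P alpha) i * rsum d (fun j => hneg (P alpha) j))
               / (alpha - 1))
  /\
  (alpha = 1 ->
     (forall i, (i < d)%nat -> right_deriv (fun a => P a i) 1 (g i)) ->
     forall i, (i < d)%nat ->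
       g i = (hneg (P 1) i * ln (P 1 i)
              - P 1 i * rsum d (fun j => hneg (P 1) j * ln (P 1 j))) / 2).
Proof.
  split.
  - intros Ha Hg i Hi. exact (gt_main d z alpha P g Ha hP Hg i Hi).
  - intros Ha Hg i Hi. exact (eq_main d z P g hd hP Hg i Hi).
Qed.
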